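(* There exists $\sigma_0>0$ such that for every $\sigma\in(0,\sigma_0)$ and all pairs of integers $(m,n)\ne(m',n')$ with $0\le m\le n$ and $0\le m'\le n'$, one has $\Lambda_{m,n}(\sigma)\neq\Lambda_{m',n'}(\sigma)$. (That is, for small $\sigma>0$ the Robin spectrum of the equilateral triangle has no multiplicities besides the systematic doubling $\Lambda_{m,n}=\Lambda_{n,m}$.)
   Context: Fix $r>0$ (the inradius of an equilateral triangle $T$). For integers $m,n\ge0$ and $\sigma\ge0$, let $(L,M,N)$ with $L\in(-\pi/2,0]$ and $M,N\in[0,\pi/2)$ be the unique solution of the system $$\big(2L-M-N-(m+n)\pi\big)\tan L=3r\sigma,\quad \big(2M-N-L+m\pi\big)\tan M=3r\sigma,\quad \big(2N-L-M+n\pi\big)\tan N=3r\sigma .$$ Set $\mu=\frac{2M-N-L}{\pi}+m$, $\nu=\frac{2N-L-M}{\pi}+n$, and $\Lambda_{m,n}(\sigma)=\frac{4\pi^2}{27r^2}(\mu^2+\mu\nu+\nu^2)$. By McCartin's theorem the Robin spectrum of $T$ (problem $\Delta f+\lambda f=0$ in $T$, $\partial f/\partial n+\sigma f=0$ on $\partial T$) consists of the numbers $\Lambda_{m,n}(\sigma)$, $0\le m\le n$, with $\Lambda_{m,n}$ counted twice for $m<n$ (a symmetric and an antisymmetric eigenfunction) and once for $m=n$; the set $\{\Lambda_{m,n}(\sigma)\}_{0\le m\le n}$ is the desymmetrized spectrum. *)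

(* Defs.v *)
From Stdlib Require Import Reals.
Open Scope R_scope.

(* (L,M,N) solves McCartin's Robin system for indices (m,n), parameter sigma,
   inradius r, with L in (-pi/2,0], M,N in [0,pi/2). *)
Definition robin_sys (r sigma : R) (m n : nat) (L M N : R) : Prop :=
  - PI / 2 < L <= 0 /\ 0 <= M < PI / 2 /\ 0 <= N < PI / 2 /\
  (2 * L - M - N - (INR m + INR n) * PI) * tan L = 3 * r * sigma /\
  (2 * M - N - L + INR m * PI) * tan M = 3 * r * sigma /\
  (2 * N - L - M + INR n * PI) * tan N = 3 * r * sigma.

Definition robin_mu (m : nat) (L M N : R) : R := (2 * M - N - L) / PI + INR m.
Definition robin_nu (n : nat) (L M N : R) : R := (2 * N - L - M) / PI + INR n.

Definition robin_Lambda (r : R) (m n : nat) (L M N : R) : R :=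
  let mu := robin_mu m L M N in
  let nu := robin_nu n L M N in
  4 * PI ^ 2 / (27 * r ^ 2) * (mu ^ 2 + mu * nu + nu ^ 2).

(* Main.v *)
Require Import Defs.
From Stdlib Require Import Reals Lra Psatz Arith Lia.
Open Scope R_scope.

Lemma nonneg_from_deriv (f f' : R -> R) (t : R) :
  0 <= t -> f 0 = 0 ->
  (forall c, 0 <= c <= t -> derivable_pt_lim f c (f' c)) ->
  (forall c, 0 <= c -> 0 <= f' c) -> 0 <= f t.
Proof.
  intros Ht H0 Hd Hp. destruct (Req_dec t 0) as [->|Hn]; [lra|].
  destruct (MVT_cor2 f f' 0 t) as [c [Hc1 Hc2]]; [lra| exact Hd |].
  assert (0 <= f' c) by (apply Hp; lra).
  assert (0 <= f' c * (t - 0)) by (apply Rmult_le_pos; lra). lra.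
Qed.

Lemma atan_le_id t : 0 <= t -> atan t <= t.
Proof.
  intro Ht.
  assert (H := nonneg_from_deriv (fun x => x - atan x) (fun x => 1 - / (1 + x^2)) t Ht).
  assert (0 <= t - atan t); [|lra].
  apply H; [cbv beta; rewrite atan_0; field| |].
  - intros c _. apply (derivable_pt_lim_minus id atan); [apply derivable_pt_lim_id | apply derivable_pt_lim_atan].
  - intros c _. cbv beta. assert (0 < 1 + c^2) by nra.
    assert (/ (1 + c^2) <= 1); [|lra].
    rewrite <- Rinv_1. apply Rinv_le_contravar; nra.
Qed.

Lemma atan_ge3 t : 0 <= t -> t - t^3/3 <= atan t.
Proof.
  intro Ht.
  assert (H := nonneg_from_deriv (fun x => atan x - x + x^3/3)
     (fun x => / (1 + x^2) - 1 + x^2) t Ht).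
  assert (0 <= atan t - t + t^3/3); [|lra].
  apply H; [cbv beta; rewrite atan_0; field| |].
  - intros c _.
    replace (/ (1 + c^2) - 1 + c^2) with (/ (1 + c^2) - 1 + (INR 3 * c^(3-1))/3)
      by (simpl; field; nra).
    apply derivable_pt_lim_plus.
    + apply derivable_pt_lim_minus; [apply derivable_pt_lim_atan | apply derivable_pt_lim_id].
    + apply (derivable_pt_lim_div_scal (fun x => x^3)). apply derivable_pt_lim_pow.
  - intros c _. cbv beta. assert (0 < 1 + c^2) by nra.
    replace (/ (1 + c^2) - 1 + c^2) with (c^4 / (1 + c^2)) by (field; lra).
    apply Rle_mult_inv_pos; nra.
Qed.

Lemma atan_le5 t : 0 <= t -> atan t <= t - t^3/3 + t^5/5.
Proof.
  intro Ht.
  assert (H := nonneg_from_deriv (fun x => x - x^3/3 + x^5/5 - atan x)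
     (fun x => 1 - x^2 + x^4 - / (1 + x^2)) t Ht).
  assert (0 <= t - t^3/3 + t^5/5 - atan t); [|lra].
  apply H; [cbv beta; rewrite atan_0; field| |].
  - intros c _.
    replace (1 - c^2 + c^4 - / (1 + c^2)) with
      (1 - (INR 3 * c^(3-1))/3 + (INR 5 * c^(5-1))/5 - / (1 + c^2))
      by (simpl; field; nra).
    apply derivable_pt_lim_minus; [|apply derivable_pt_lim_atan].
    apply derivable_pt_lim_plus; [apply derivable_pt_lim_minus|].
    + apply derivable_pt_lim_id.
    + apply (derivable_pt_lim_div_scal (fun x => x^3)). apply derivable_pt_lim_pow.
    + apply (derivable_pt_lim_div_scal (fun x => x^5)). apply derivable_pt_lim_pow.
  - intros c _. cbv beta. assert (0 < 1 + c^2) by nra.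
    replace (1 - c^2 + c^4 - / (1 + c^2)) with (c^6 / (1 + c^2)) by (field; lra).
    apply Rle_mult_inv_pos; nra.
Qed.

Definition Eq (M N a : R) := M^2+N^2+a^2 - M*N + M*a + N*a.
Definition Pq (mu nu M N a : R) := mu*M + nu*N + (mu+nu)*a.

Lemma Eq_pert t1 t2 t3 d1 d2 d3 :
  0 <= t3 -> t3 <= t2 -> t2 <= t1 -> t1 <= 1 ->
  0 <= d1 <= t1^3/3 -> 0 <= d2 <= t1^3/3 -> 0 <= d3 <= t1^3/3 ->
  Rabs (Eq (t1-d1) (t2-d2) (t3-d3) - Eq t1 t2 t3) <= 5*t1^4.
Proof.
  intros.
  assert (Epos : forall x y z, 0 <= Eq x y z).
  { intros x y z. unfold Eq.
    replace (x^2+y^2+z^2 - x*y + x*z + y*z) with (((x-y)^2 + (x+z)^2 + (y+z)^2)/2) by field.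
    assert (0 <= (x-y)^2) by apply pow2_ge_0.
    assert (0 <= (x+z)^2) by apply pow2_ge_0.
    assert (0 <= (y+z)^2) by apply pow2_ge_0. lra. }
  assert (Hid : Eq (t1-d1) (t2-d2) (t3-d3) - Eq t1 t2 t3 =
    - ((2*t1 - t2 + t3)*d1 + (2*t2 - t1 + t3)*d2 + (2*t3 + t1 + t2)*d3) + Eq d1 d2 d3)
    by (unfold Eq; ring).
  rewrite Hid.
  assert (G1 : Rabs ((2*t1 - t2 + t3)*d1) <= 4*t1*(t1^3/3)).
  { rewrite Rabs_mult. apply Rmult_le_compat; try apply Rabs_pos.
    - apply Rabs_le; lra.
    - rewrite Rabs_right; lra. }
  assert (G2 : Rabs ((2*t2 - t1 + t3)*d2) <= 4*t1*(t1^3/3)).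
  { rewrite Rabs_mult. apply Rmult_le_compat; try apply Rabs_pos.
    - apply Rabs_le; lra.
    - rewrite Rabs_right; lra. }
  assert (G3 : Rabs ((2*t3 + t1 + t2)*d3) <= 4*t1*(t1^3/3)).
  { rewrite Rabs_mult. apply Rmult_le_compat; try apply Rabs_pos.
    - apply Rabs_le; lra.
    - rewrite Rabs_right; lra. }
  assert (E0 := Epos d1 d2 d3).
  assert (c3 : 0 <= t1^3) by (apply pow_le; lra).
  assert (E1 : Eq d1 d2 d3 <= 5 * (t1^3/3)^2).
  { unfold Eq. assert (d1*d2 <= (t1^3/3)^2) by (simpl; nra).
    assert (d1*d3 <= (t1^3/3)^2) by (simpl; nra).
    assert (d2*d3 <= (t1^3/3)^2) by (simpl; nra).
    assert (d1^2 <= (t1^3/3)^2) by (simpl; nra).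
    assert (d2^2 <= (t1^3/3)^2) by (simpl; nra).
    assert (d3^2 <= (t1^3/3)^2) by (simpl; nra).
    nra. }
  assert (E2 : 5 * (t1^3/3)^2 <= t1^4).
  { assert (0 <= t1^2 <= 1) by (split; nra).
    replace (5 * (t1^3/3)^2) with (5/9 * t1^2 * t1^4) by field.
    assert (0 <= t1^4) by (apply pow_le; lra). nra. }
  eapply Rle_trans. apply Rabs_triang. rewrite Rabs_Ropp.
  eapply Rle_trans. apply Rplus_le_compat_r. eapply Rle_trans. apply Rabs_triang.
  apply Rplus_le_compat_r. apply Rabs_triang.
  rewrite (Rabs_right (Eq d1 d2 d3)) by lra.
  lra.
Qed.


Lemma dQ_id p mu nu M N a m n : p <> 0 ->
  p*mu = 2*M-N+a+m*p -> p*nu = 2*N-M+a+n*p ->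
  mu^2+mu*nu+nu^2 - (m^2+m*n+n^2) = 3*Pq mu nu M N a/p - 3*Eq M N a/p^2.
Proof.
  intros Hp H1 H2.
  assert (Hm : m = (p*mu - (2*M-N+a))/p) by (field_simplify_eq; [lra|auto]).
  assert (Hn : n = (p*nu - (2*N-M+a))/p) by (field_simplify_eq; [lra|auto]).
  rewrite Hm, Hn. unfold Pq, Eq. field. auto.
Qed.

Lemma dQ_bounds p k mu nu M N a m n t1 t2 t3 :
  3 < p -> 0 < k -> 0 <= m ->
  p*mu = 2*M-N+a+m*p -> p*nu = 2*N-M+a+n*p ->
  mu*t1 = k -> nu*t2 = k -> (mu+nu)*t3 = k -> 0 < mu -> 0 < nu ->
  0 <= a -> a <= N -> N <= M -> M <= t1 -> N <= t2 -> a <= t3 ->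
  -5*k <= mu^2+mu*nu+nu^2 - (m^2+m*n+n^2) <= 3*k.
Proof.
  intros Hp Hk Hm H1 H2 E1 E2 E3 Hmu Hnu Ha HaN HNM HM HN Hat.
  rewrite (dQ_id p mu nu M N a m n) by (auto; lra).
  assert (P1 : mu*M <= k) by nra.
  assert (P2 : nu*N <= k) by nra.
  assert (P3 : (mu+nu)*a <= k) by nra.
  assert (P0 : 0 <= Pq mu nu M N a) by (unfold Pq; nra).
  assert (PP : Pq mu nu M N a <= 3*k) by (unfold Pq; lra).
  assert (E0 : 0 <= Eq M N a) by (unfold Eq; nra).
  assert (EM : Eq M N a <= 5*M^2) by (unfold Eq; nra).
  assert (HMM : M^2 <= p*k).
  { assert (M <= p*mu) by nra.
    assert (M*M <= M*(p*mu)) by (apply Rmult_le_compat_l; lra).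
    assert (mu*M <= mu*t1) by (apply Rmult_le_compat_l; lra).
    nra. }
  assert (A1 : 3 * Pq mu nu M N a / p <= 3*k).
  { apply Rmult_le_reg_r with p; [lra|]. field_simplify; [|lra]. nra. }
  assert (A2 : 3 * Eq M N a / p^2 <= 5*k).
  { apply Rmult_le_reg_r with (p^2); [nra|]. field_simplify; [|lra]. nra. }
  assert (A3 : 0 <= 3 * Pq mu nu M N a / p) by (apply Rle_mult_inv_pos; lra).
  assert (A4 : 0 <= 3 * Eq M N a / p^2) by (apply Rle_mult_inv_pos; nra).
  lra.
Qed.

Lemma expansion p k mu nu M N a t1 t2 t3 :
 3 < p <= 4 -> 0 < k <= 1/100 -> 1 <= mu <= nu ->
 mu*t1 = k -> nu*t2 = k -> (mu+nu)*t3 = k ->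
 t1 - t1^3/3 <= M <= t1 - t1^3/3 + t1^5/5 ->
 t2 - t2^3/3 <= N <= t2 - t2^3/3 + t2^5/5 ->
 t3 - t3^3/3 <= a <= t3 - t3^3/3 + t3^5/5 ->
 M <= t1 -> N <= t2 -> a <= t3 ->
 Rabs (p*Pq mu nu M N a - Eq M N a - (3*p*k - (1+p*k/3)*(t1^2+t2^2+t3^2))) <= 6*t1^4.
Proof.
  intros Hp Hk Hmu E1 E2 E3 HM HN Ha HM' HN' Ha'.
  assert (T1 : t1 = k/mu) by (field_simplify_eq; lra).
  assert (T2 : t2 = k/nu) by (field_simplify_eq; lra).
  assert (T3 : t3 = k/(mu+nu)) by (field_simplify_eq; lra).
  assert (t1p : 0 < t1) by (rewrite T1; apply Rdiv_lt_0_compat; lra).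
  assert (t2p : 0 < t2) by (rewrite T2; apply Rdiv_lt_0_compat; lra).
  assert (t3p : 0 < t3) by (rewrite T3; apply Rdiv_lt_0_compat; lra).
  assert (t1k : t1 <= k) by nra.
  assert (t21 : t2 <= t1) by nra.
  assert (t32 : t3 <= t2) by nra.
  set (d1 := t1 - M). set (d2 := t2 - N). set (d3 := t3 - a).
  assert (c31 : 0 <= t1^3) by (apply pow_le; lra).
  assert (t2c : t2^3 <= t1^3) by (apply pow_incr; lra).
  assert (t3c : t3^3 <= t1^3) by (apply pow_incr; lra).
  assert (Hd1 : 0 <= d1 <= t1^3/3).
  { unfold d1. split; [lra|]. assert (0 <= t1^5) by (apply pow_le; lra). lra. }
  assert (Hd2 : 0 <= d2 <= t1^3/3).
  { unfold d2. split; [lra|]. assert (0 <= t2^5) by (apply pow_le; lra). lra. }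
  assert (Hd3 : 0 <= d3 <= t1^3/3).
  { unfold d3. split; [lra|]. assert (0 <= t3^5) by (apply pow_le; lra). lra. }
  assert (Hpert := Eq_pert t1 t2 t3 d1 d2 d3 ltac:(lra) t32 t21 ltac:(lra) Hd1 Hd2 Hd3).
  replace (t1 - d1) with M in Hpert by (unfold d1; ring).
  replace (t2 - d2) with N in Hpert by (unfold d2; ring).
  replace (t3 - d3) with a in Hpert by (unfold d3; ring).
  assert (ES : Eq t1 t2 t3 = t1^2+t2^2+t3^2).
  { unfold Eq. rewrite T1, T2, T3. field. lra. }
  rewrite ES in Hpert.
  set (r1 := t1^3/3 - d1). set (r2 := t2^3/3 - d2). set (r3 := t3^3/3 - d3).
  assert (Hr1 : 0 <= r1 <= t1^5/5) by (unfold r1, d1; lra).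
  assert (Hr2 : 0 <= r2 <= t2^5/5) by (unfold r2, d2; lra).
  assert (Hr3 : 0 <= r3 <= t3^5/5) by (unfold r3, d3; lra).
  assert (PqE : p*Pq mu nu M N a = 3*p*k - p*k/3*(t1^2+t2^2+t3^2)
                  + p*(mu*r1 + nu*r2 + (mu+nu)*r3)).
  { unfold Pq, r1, r2, r3, d1, d2, d3.
    replace (mu * M) with (mu*t1 - mu*t1*t1^2/3 + mu*(t1^3/3 - (t1 - M))) by field.
    replace (nu * N) with (nu*t2 - nu*t2*t2^2/3 + nu*(t2^3/3 - (t2 - N))) by field.
    replace ((mu+nu) * a) with ((mu+nu)*t3 - (mu+nu)*t3*t3^2/3 + (mu+nu)*(t3^3/3 - (t3 - a))) by field.
    rewrite E1, E2, E3. field. }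
  assert (R1 : mu*r1 <= k*t1^4/5).
  { replace (k*t1^4/5) with (mu*(t1^5/5)) by (rewrite <- E1; field).
    apply Rmult_le_compat_l; lra. }
  assert (R2 : nu*r2 <= k*t1^4/5).
  { apply Rle_trans with (k*t2^4/5).
    - replace (k*t2^4/5) with (nu*(t2^5/5)) by (rewrite <- E2; field).
      apply Rmult_le_compat_l; lra.
    - assert (t2^4 <= t1^4) by (apply pow_incr; lra). nra. }
  assert (R3 : (mu+nu)*r3 <= k*t1^4/5).
  { apply Rle_trans with (k*t3^4/5).
    - replace (k*t3^4/5) with ((mu+nu)*(t3^5/5)) by (rewrite <- E3; field).
      apply Rmult_le_compat_l; lra.
    - assert (t3^4 <= t2^4) by (apply pow_incr; lra).
      assert (t2^4 <= t1^4) by (apply pow_incr; lra). nra. }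
  assert (R0 : 0 <= mu*r1 + nu*r2 + (mu+nu)*r3).
  { assert (0 <= mu*r1) by (apply Rmult_le_pos; lra).
    assert (0 <= nu*r2) by (apply Rmult_le_pos; lra).
    assert (0 <= (mu+nu)*r3) by (apply Rmult_le_pos; lra). lra. }
  rewrite PqE.
  set (Rr := mu*r1 + nu*r2 + (mu+nu)*r3) in *.
  set (Ss := t1^2+t2^2+t3^2) in *.
  replace (3 * p * k - p * k / 3 * Ss + p * Rr - Eq M N a - (3 * p * k - (1 + p * k / 3) * Ss))
    with (p*Rr - (Eq M N a - Ss)) by ring.
  assert (t14 : 0 <= t1^4) by (apply pow_le; lra).
  assert (pR : p*Rr <= p*(3*k*t1^4/5)) by (apply Rmult_le_compat_l; unfold Rr; lra).
  assert (pk : p*k <= 4*(1/100)) by (apply Rmult_le_compat; lra).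
  assert (pR2 : p*(3*k*t1^4/5) <= t1^4).
  { replace (p*(3*k*t1^4/5)) with ((p*k)*(3/5)*t1^4) by field. nra. }
  assert (pR0 : 0 <= p*Rr) by (apply Rmult_le_pos; lra).
  eapply Rle_trans. apply Rabs_triang. rewrite Rabs_Ropp.
  rewrite (Rabs_right (p*Rr)) by lra. lra.
Qed.

Lemma m0_bound p k mu nu M N a t1 t2 t3 :
  3 < p -> 0 < k ->
  p*mu = 2*M-N+a ->
  mu*t1 = k -> nu*t2 = k -> (mu+nu)*t3 = k -> 0 < mu -> 0 < nu ->
  0 <= a -> a <= N -> N <= M -> M <= t1 -> N <= t2 -> a <= t3 ->
  p*Pq mu nu M N a - Eq M N a <= 3*p*k - p*k/12.
Proof.
  intros Hp Hk H1 E1 E2 E3 Hmu Hnu Ha HaN HNM HM HN Hat.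
  assert (P1 : mu*M <= k) by nra.
  assert (P2 : nu*N <= k) by nra.
  assert (P3 : (mu+nu)*a <= k) by nra.
  assert (EM : M^2/2 <= Eq M N a).
  { unfold Eq.
    replace (M^2+N^2+a^2 - M*N + M*a + N*a) with (((M-N)^2 + (M+a)^2 + (N+a)^2)/2) by field.
    assert (0 <= (M-N)^2) by apply pow2_ge_0.
    assert (M^2 <= (M+a)^2) by (simpl; nra).
    assert (0 <= (N+a)^2) by apply pow2_ge_0. lra. }
  unfold Pq.
  destruct (Rle_lt_dec (M^2) (p*k/6)) as [Hs|Hs].
  - assert (pmuM : p*(mu*M) <= 3*M^2).
    { replace (p*(mu*M)) with ((p*mu)*M) by ring. rewrite H1. simpl. nra. }
    assert (0 <= M^2/2) by (assert (0 <= M^2) by apply pow2_ge_0; lra).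
    assert (p*(nu*N) <= p*k) by (apply Rmult_le_compat_l; lra).
    assert (p*((mu+nu)*a) <= p*k) by (apply Rmult_le_compat_l; lra).
    assert (p*k > 0) by nra.
    replace (p * (mu * M + nu * N + (mu + nu) * a)) with
      (p*(mu*M) + p*(nu*N) + p*((mu+nu)*a)) by ring.
    lra.
  - assert (p*(mu*M) <= p*k) by (apply Rmult_le_compat_l; lra).
    assert (p*(nu*N) <= p*k) by (apply Rmult_le_compat_l; lra).
    assert (p*((mu+nu)*a) <= p*k) by (apply Rmult_le_compat_l; lra).
    replace (p * (mu * M + nu * N + (mu + nu) * a)) with
      (p*(mu*M) + p*(nu*N) + p*((mu+nu)*a)) by ring.
    lra.
Qed.

Open Scope nat_scope.

Lemma same_sum m n m' n' : m <= n -> m' <= n' ->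
  m*m+m*n+n*n = m'*m'+m'*n'+n'*n' -> m + n = m' + n' -> m = m' /\ n = n'.
Proof.
  intros H1 H2 HQ Hs.
  assert (Hp : m*n = m'*n') by nia.
  assert (Hd : (n-m)*(n-m) = (n'-m')*(n'-m')) by nia.
  assert (n - m = n' - m') by nia.
  lia.
Qed.

Lemma int_sep m n m' n' : m <= n -> m' <= n' -> (m,n) <> (m',n') ->
  m*m+m*n+n*n = m'*m'+m'*n'+n'*n' ->
  m*n*(m+n) + 2*(m*m+m*n+n*n) <= m'*n'*(m'+n') \/
  m'*n'*(m'+n') + 2*(m*m+m*n+n*n) <= m*n*(m+n).
Proof.
  intros H1 H2 Hne HQ.
  assert (Hs : m + n <> m' + n').
  { intro Hs. destruct (same_sum m n m' n' H1 H2 HQ Hs). subst. congruence. }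
  set (Q := m*m+m*n+n*n) in *.
  assert (Z1 : m*n*(m+n) + Q*(m+n) = (m+n)*(m+n)*(m+n)) by (unfold Q; nia).
  assert (Z2 : m'*n'*(m'+n') + Q*(m'+n') = (m'+n')*(m'+n')*(m'+n')) by (unfold Q in *; nia).
  assert (S1 : Q <= (m+n)*(m+n)) by (unfold Q; nia).
  assert (S2 : Q <= (m'+n')*(m'+n')) by (unfold Q in *; nia).
  set (s := m+n) in *. set (s' := m'+n') in *.
  clearbody Q s s'.
  destruct (Nat.lt_total s s') as [Hl|[Hl|Hl]].
  - left. assert (exists d, s' = s + S d) as [d ->] by (exists (s' - s - 1); lia).
    assert (Q <= s*(s + S d)) by nia.
    assert (Q*S d <= (s + S d)*(s+S d)*S d + s*(s+S d)*S d + s*s*S d) by nia.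
    nia.
  - lia.
  - right. assert (exists d, s = s' + S d) as [d ->] by (exists (s - s' - 1); lia).
    assert (Q <= s'*(s' + S d)) by nia.
    nia.
Qed.

Open Scope R_scope.

Lemma Rabs_le_inv a b : Rabs a <= b -> -b <= a <= b.
Proof.
  intros H. split.
  - assert (- a <= Rabs a) by (rewrite <- Rabs_Ropp; apply Rle_abs). lra.
  - assert (a <= Rabs a) by apply Rle_abs. lra.
Qed.

Lemma final_W k Q Q0 W W' Z Z' S S' :
  0 < k <= 1/100 -> 1 <= Q0 -> 0 < Q -> Q <= Q0 + 1/2 -> 0 < W -> 0 < W' -> Q <= 2*W ->
  S = k^2*Q^2/W^2 -> S' = k^2*Q^2/W'^2 -> Rabs (S - S') <= 6*(S^2 + S'^2) ->
  Rabs (W - Z) <= Q0/2 -> Rabs (W' - Z') <= Q0/2 -> Z + 2*Q0 <= Z' -> False.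
Proof.
  intros Hk HQ0 HQ HQQ HW HW' HQW ES ES' HS HZ HZ' HZZ.
  apply Rabs_le_inv in HZ. apply Rabs_le_inv in HZ'.
  assert (HWW : W + Q0 <= W') by lra.
  assert (S'le : S' <= S).
  { rewrite ES, ES'. unfold Rdiv. apply Rmult_le_compat_l.
    - assert (0 < k^2*Q^2) by (apply Rmult_lt_0_compat; apply pow_lt; lra). lra.
    - apply Rinv_le_contravar; [apply pow_lt; lra|]. apply pow_incr; lra. }
  assert (S'0 : 0 <= S') by (rewrite ES'; apply Rle_mult_inv_pos; [nra| apply pow_lt; lra]).
  assert (HS2 : S - S' <= 12 * S^2).
  { apply Rabs_le_inv in HS. assert (S'^2 <= S^2) by (apply pow_incr; lra). lra. }
  assert (K : (W'^2 - W^2)*W^2 <= 12*k^2*Q^2*W'^2).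
  { rewrite ES, ES' in HS2.
    assert (Hpos : 0 < k^2*Q^2) by (apply Rmult_lt_0_compat; apply pow_lt; lra).
    assert (Hq : k^2*Q^2/W^2 - k^2*Q^2/W'^2 = (k^2*Q^2)*((W'^2 - W^2)*W^2)/(W^4*W'^2))
      by (field; lra).
    assert (Hr : 12*(k^2*Q^2/W^2)^2 = (k^2*Q^2)*(12*k^2*Q^2*W'^2)/(W^4*W'^2))
      by (field; lra).
    rewrite Hq, Hr in HS2.
    assert (D : 0 < W^4*W'^2) by (apply Rmult_lt_0_compat; apply pow_lt; lra).
    unfold Rdiv in HS2.
    apply Rmult_le_reg_r in HS2; [| apply Rinv_0_lt_compat; lra].
    apply Rmult_le_reg_l in HS2; lra. }
  assert (K2 : (W'^2 - W^2)*W <= 24*k^2*Q*W'^2).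
  { apply Rmult_le_reg_r with W; [lra|].
    assert (12*k^2*Q^2*W'^2 <= 24*k^2*Q*W'^2*W).
    { replace (24*k^2*Q*W'^2*W) with (12*k^2*Q*W'^2*(2*W)) by ring.
      replace (12*k^2*Q^2*W'^2) with (12*k^2*Q*W'^2*Q) by ring.
      apply Rmult_le_compat_l; [|lra].
      assert (0 <= k^2) by (apply pow_le; lra).
      assert (0 <= W'^2) by (apply pow_le; lra).
      assert (0 <= 12*k^2*Q) by nra. nra. }
    replace ((W'^2 - W^2)*W*W) with ((W'^2 - W^2)*W^2) by ring. lra. }
  assert (k2 : k^2 <= 1/10000) by nra.
  assert (k20 : 0 < k^2) by nra.
  destruct (Rle_lt_dec W' (2*W)) as [C|C].
  - assert (L1 : Q0*W'*W <= (W'^2 - W^2)*W).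
    { apply Rmult_le_compat_r; [lra|]. nra. }
    assert (L2 : Q0*W <= 24*k^2*Q*W').
    { apply Rmult_le_reg_r with W'; [lra|]. nra. }
    assert (L3 : 24*k^2*Q*W' <= 24*k^2*Q*(2*W)).
    { apply Rmult_le_compat_l; [nra|lra]. }
    assert (L4 : Q0 <= 48*k^2*Q).
    { apply Rmult_le_reg_r with W; [lra|]. nra. }
    nra.
  - assert (L1 : 3/4*W'^2*W <= (W'^2 - W^2)*W).
    { apply Rmult_le_compat_r; [lra|]. nra. }
    assert (L2 : W <= 32*k^2*Q).
    { assert (0 < W'^2) by nra. nra. }
    nra.
Qed.

Lemma WZ_bound m n x y k : 1 <= m -> m <= n -> 0 <= x <= k -> -k <= y <= k -> 0 < k <= 1/100 ->
  Rabs ((m+x)*(n+y)*(m+n+x+y) - m*n*(m+n)) <= (m^2+m*n+n^2)/2.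
Proof.
  intros Hm Hmn Hx Hy Hk.
  assert (E : (m+x)*(n+y)*(m+n+x+y) - m*n*(m+n) =
     m*n*(x+y) + (m*y+n*x)*(m+n) + (m*y+n*x)*(x+y) + x*y*(m+n) + x*y*(x+y)) by ring.
  rewrite E.
  set (s := m+n).
  assert (A1 : Rabs (m*n*(x+y)) <= m*n*(2*k)).
  { rewrite Rabs_mult. rewrite (Rabs_right (m*n)) by nra. apply Rmult_le_compat_l; [nra|].
    apply Rabs_le; lra. }
  assert (A2 : Rabs ((m*y+n*x)*s) <= (k*s)*s).
  { rewrite Rabs_mult. rewrite (Rabs_right s) by (unfold s; lra). apply Rmult_le_compat_r; [unfold s; lra|].
    apply Rabs_le. unfold s. split; nra. }
  assert (A3 : Rabs ((m*y+n*x)*(x+y)) <= (k*s)*(2*k)).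
  { rewrite Rabs_mult. apply Rmult_le_compat; try apply Rabs_pos.
    - apply Rabs_le. unfold s. split; nra.
    - apply Rabs_le; lra. }
  assert (A4 : Rabs (x*y*s) <= (k*k)*s).
  { rewrite Rabs_mult. rewrite (Rabs_right s) by (unfold s; lra). apply Rmult_le_compat_r; [unfold s; lra|].
    rewrite Rabs_mult. apply Rmult_le_compat; try apply Rabs_pos; apply Rabs_le; lra. }
  assert (A5 : Rabs (x*y*(x+y)) <= (k*k)*(2*k)).
  { rewrite Rabs_mult. apply Rmult_le_compat; try apply Rabs_pos.
    - rewrite Rabs_mult. apply Rmult_le_compat; try apply Rabs_pos; apply Rabs_le; lra.
    - apply Rabs_le; lra. }
  assert (T : Rabs (m*n*(x+y) + (m*y+n*x)*s + (m*y+n*x)*(x+y) + x*y*s + x*y*(x+y)) <=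
     m*n*(2*k) + (k*s)*s + (k*s)*(2*k) + (k*k)*s + (k*k)*(2*k)).
  { repeat (eapply Rle_trans; [apply Rabs_triang|]; apply Rplus_le_compat; [|assumption]).
    assumption. }
  eapply Rle_trans; [exact T|].
  assert (s2 : s <= s*s) by (unfold s; nra).
  assert (mn0 : 0 <= m*n) by nra.
  assert (Q : m^2+m*n+n^2 = s*s - m*n) by (unfold s; ring).
  rewrite Q.
  assert (H4 : s*s <= 4*(s*s - m*n)) by (unfold s; nra).
  set (q := s*s - m*n) in *.
  assert (q1 : 1 <= q) by (unfold s in *; nra).
  assert (B1 : m*n*(2*k) <= 6*k*q) by nra.
  assert (B2 : k*s*s <= 4*k*q) by nra.
  assert (B3 : (k*s)*(2*k) + (k*k)*s <= 3*k*k*(4*q)) by nra.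
  assert (B4 : (k*k)*(2*k) <= 2*k*k*k*q).
  { assert (0 <= k*k*k) by (apply Rmult_le_pos; nra). nra. }
  assert (k*k <= k/100) by nra.
  assert (k*k*k <= k/10000) by nra.
  assert (k*q <= q/100) by nra.
  assert (k*k*q <= q/10000) by nra.
  assert (k*k*k*q <= q/1000000) by nra.
  lra.
Qed.

Lemma tan_nonneg x : 0 <= x < PI/2 -> 0 <= tan x.
Proof.
  intros [H1 H2]. destruct (Req_dec x 0) as [->|Hx].
  - rewrite tan_0; lra.
  - left. apply tan_gt_0; lra.
Qed.

Lemma tan_le_inv x y : 0 <= x < PI/2 -> 0 <= y < PI/2 -> tan x <= tan y -> x <= y.
Proof.
  intros Hx Hy H. destruct (Rle_lt_dec x y) as [|Hl]; [auto|].
  exfalso. assert (tan y < tan x) by (apply tan_increasing; lra). lra.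
Qed.

Lemma sol_facts r sigma m n L M N : 0 < r -> 0 < sigma -> (m <= n)%nat ->
  robin_sys r sigma m n L M N ->
  PI * robin_mu m L M N = 2*M - N + (-L) + INR m * PI /\
  PI * robin_nu n L M N = 2*N - M + (-L) + INR n * PI /\
  robin_mu m L M N * tan M = 3*r*sigma/PI /\
  robin_nu n L M N * tan N = 3*r*sigma/PI /\
  (robin_mu m L M N + robin_nu n L M N) * tan (-L) = 3*r*sigma/PI /\
  0 < robin_mu m L M N /\ robin_mu m L M N <= robin_nu n L M N /\
  0 <= -L /\ -L <= N /\ N <= M /\ M < PI/2.
Proof.
  intros Hr Hs Hmn [HL [HM [HN [E1 [E2 E3]]]]].
  assert (Hpi : 0 < PI) by apply PI_RGT_0.
  set (mu := robin_mu m L M N). set (nu := robin_nu n L M N).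
  assert (Emu : PI * mu = 2*M - N + (-L) + INR m * PI) by (unfold mu, robin_mu; field; lra).
  assert (Enu : PI * nu = 2*N - M + (-L) + INR n * PI) by (unfold nu, robin_nu; field; lra).
  assert (hp : 0 < 3*r*sigma) by nra.
  set (k := 3*r*sigma/PI).
  assert (kp : 0 < k) by (unfold k; apply Rdiv_lt_0_compat; lra).
  assert (G1 : PI*mu*tan M = 3*r*sigma).
  { rewrite Emu. rewrite <- E2. ring. }
  assert (G2 : PI*nu*tan N = 3*r*sigma).
  { rewrite Enu. rewrite <- E3. ring. }
  assert (G3 : PI*(mu+nu)*tan (-L) = 3*r*sigma).
  { rewrite <- E1. rewrite tan_neg.
    replace (PI * (mu + nu) * - tan L) with (- (PI*mu + PI*nu) * tan L) by ring.
    rewrite Emu, Enu. ring. }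
  assert (F1 : mu * tan M = k) by (unfold k; rewrite <- G1; field; lra).
  assert (F2 : nu * tan N = k) by (unfold k; rewrite <- G2; field; lra).
  assert (F3 : (mu + nu) * tan (-L) = k) by (unfold k; rewrite <- G3; field; lra).
  assert (tM := tan_nonneg M ltac:(lra)).
  assert (tN := tan_nonneg N ltac:(lra)).
  assert (ta := tan_nonneg (-L) ltac:(lra)).
  assert (mup : 0 < mu) by (destruct (Rle_lt_dec mu 0); [nra|auto]).
  assert (nup : 0 < nu) by (destruct (Rle_lt_dec nu 0); [nra|auto]).
  assert (tMp : 0 < tan M) by (destruct (Rle_lt_dec (tan M) 0); [nra|auto]).
  assert (tNp : 0 < tan N) by (destruct (Rle_lt_dec (tan N) 0); [nra|auto]).
  assert (Hmnr : INR m <= INR n) by (apply le_INR; auto).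
  assert (munu : mu <= nu).
  { destruct (Rle_lt_dec mu nu) as [|Hl]; [auto|exfalso].
    assert (tan M <= tan N) by nra.
    assert (M <= N) by (apply tan_le_inv; lra).
    assert (PI*mu <= PI*nu) by nra. nra. }
  assert (NM : N <= M) by (apply tan_le_inv; [lra|lra|nra]).
  assert (aN : -L <= N) by (apply tan_le_inv; [lra|lra|nra]).
  repeat split; auto; lra.
Qed.

Open Scope R_scope.

Lemma angle_facts th : 0 <= th < PI/2 ->
  0 <= tan th /\ th <= tan th /\ tan th - (tan th)^3/3 <= th /\
  th <= tan th - (tan th)^3/3 + (tan th)^5/5.
Proof.
  intros H. assert (t0 := tan_nonneg th H).
  assert (Hpi : 0 < PI) by apply PI_RGT_0.
  assert (Ha : atan (tan th) = th) by (apply atan_tan; lra).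
  set (t := tan th) in *. rewrite <- Ha.
  split; [auto|]. split; [apply atan_le_id; auto|].
  split; [apply atan_ge3; auto| apply atan_le5; auto].
Qed.

Lemma one_facts p k m n mu nu M N a t1 t2 t3 :
  3 < p <= 4 -> 0 < k <= 1/100 -> 1 <= m <= n ->
  p*mu = 2*M-N+a+m*p -> p*nu = 2*N-M+a+n*p ->
  mu*t1 = k -> nu*t2 = k -> (mu+nu)*t3 = k -> 0 < mu <= nu ->
  0 <= a -> a <= N -> N <= M ->
  0 <= t1 /\ M <= t1 /\ t1 - t1^3/3 <= M /\ M <= t1 - t1^3/3 + t1^5/5 ->
  0 <= t2 /\ N <= t2 /\ t2 - t2^3/3 <= N /\ N <= t2 - t2^3/3 + t2^5/5 ->
  0 <= t3 /\ a <= t3 /\ t3 - t3^3/3 <= a /\ a <= t3 - t3^3/3 + t3^5/5 ->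
  1 <= mu /\
  Rabs (p*Pq mu nu M N a - Eq M N a - (3*p*k - (1+p*k/3)*(t1^2+t2^2+t3^2)))
     <= 6*(t1^2+t2^2+t3^2)^2 /\
  t1^2+t2^2+t3^2 = k^2*(mu^2+mu*nu+nu^2)^2/(mu*nu*(mu+nu))^2 /\
  t1^2+t2^2+t3^2 <= 3*k^2 /\
  mu^2+mu*nu+nu^2 <= 2*(mu*nu*(mu+nu)) /\
  Rabs (mu*nu*(mu+nu) - m*n*(m+n)) <= (m^2+m*n+n^2)/2.
Proof.
  intros Hp Hk Hm H1 H2 E1 E2 E3 Hmu Ha HaN HNM [T1 [U1 [V1 W1]]] [T2 [U2 [V2 W2]]] [T3 [U3 [V3 W3]]].
  assert (mu1 : 1 <= mu) by nra.
  assert (t1e : t1 = k/mu) by (field_simplify_eq; lra).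
  assert (t2e : t2 = k/nu) by (field_simplify_eq; lra).
  assert (t3e : t3 = k/(mu+nu)) by (field_simplify_eq; lra).
  assert (t1k : t1 <= k) by nra.
  assert (t21 : t2 <= t1) by nra.
  assert (t32 : t3 <= t2) by nra.
  set (S := t1^2+t2^2+t3^2).
  assert (S1 : t1^2 <= S) by (unfold S; nra).
  assert (Ex := expansion p k mu nu M N a t1 t2 t3 Hp Hk ltac:(lra) E1 E2 E3
                  ltac:(lra) ltac:(lra) ltac:(lra) U1 U2 U3).
  split; [auto|]. split.
  { eapply Rle_trans; [exact Ex|].
    assert (t1^4 <= S^2) by (replace (t1^4) with ((t1^2)^2) by ring; apply pow_incr; nra). lra. }
  split.
  { unfold S. rewrite t1e, t2e, t3e. field. lra. }
  split.
  { unfold S. nra. }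
  split.
  { nra. }
  assert (Hx : mu = m + (mu - m)) by ring.
  assert (Hy : nu = n + (nu - n)) by ring.
  assert (X1 : 0 <= mu - m <= k).
  { split; [nra|]. assert (p*(mu-m) <= p*M) by nra. nra. }
  assert (Y1 : -k <= nu - n <= k).
  { split.
    - assert (-(p*M) <= p*(nu-n)) by nra. nra.
    - assert (p*(nu-n) <= p*M) by nra. nra. }
  assert (WB := WZ_bound m n (mu-m) (nu-n) k ltac:(lra) ltac:(lra) X1 Y1 Hk).
  replace (mu*nu*(mu+nu)) with ((m + (mu - m)) * (n + (nu - n)) * (m + n + (mu - m) + (nu - n))) by ring.
  exact WB.
Qed.

Lemma diff_help U c A S S' e e' : 1 <= c ->
  Rabs (U - (A - c*S)) <= e -> Rabs (U - (A - c*S')) <= e' -> Rabs (S - S') <= e + e'.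
Proof.
  intros Hc H1 H2. apply Rabs_le_inv in H1. apply Rabs_le_inv in H2.
  apply Rabs_le. destruct (Rle_lt_dec S S'); split; nra.
Qed.

Lemma nat_close A B : INR A - INR B < 1 -> INR B - INR A < 1 -> A = B.
Proof.
  intros H1 H2. destruct (Nat.lt_total A B) as [H|[H|H]]; auto; exfalso.
  - apply le_INR in H. rewrite S_INR in H. lra.
  - apply le_INR in H. rewrite S_INR in H. lra.
Qed.

Lemma Q0_INR m n : INR (m*m+m*n+n*n) = INR m^2 + INR m*INR n + INR n^2.
Proof. rewrite !plus_INR, !mult_INR. ring. Qed.

Lemma Z_INR m n : INR (m*n*(m+n)) = INR m * INR n * (INR m + INR n).
Proof. rewrite !mult_INR, plus_INR. ring. Qed.

Lemma sq3 x y z : 0 <= x^2+y^2+z^2.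
Proof. nra. Qed.

Lemma Q0_ge1 m n : 1 <= m -> 0 <= n -> 1 <= m^2 + m*n + n^2.
Proof. intros. nra. Qed.

Lemma Q_pos mu nu : 0 < mu -> 0 < nu -> 0 < mu^2+mu*nu+nu^2.
Proof. intros. nra. Qed.

Lemma W_pos mu nu : 0 < mu -> 0 < nu -> 0 < mu*nu*(mu+nu).
Proof. intros. apply Rmult_lt_0_compat; [apply Rmult_lt_0_compat|]; lra. Qed.

Lemma case01 p k U S : 3 < p <= 4 -> 0 < k <= 1/100 -> U <= 3*p*k - p*k/12 ->
  Rabs (U - (3*p*k - (1+p*k/3)*S)) <= 6*S^2 -> 0 <= S <= 3*k^2 -> False.
Proof.
  intros Hp Hk HU HE HS. apply Rabs_le_inv in HE.
  assert (pk : p*k <= 4/100) by (apply Rle_trans with (4*(1/100)); [apply Rmult_le_compat; lra| lra]).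
  assert (c : (1+p*k/3)*S <= 2*(3*k^2)).
  { assert (0 <= p*k) by nra. apply Rmult_le_compat; lra. }
  assert (S2 : S^2 <= (3*k^2)^2) by (apply pow_incr; lra).
  assert (k2 : k^2 <= k/100) by nra.
  assert (k4 : (3*k^2)^2 <= 9*k/10000).
  { replace ((3*k^2)^2) with (9*(k^2*k^2)) by ring.
    assert (0 <= k^2) by nra.
    assert (k^2*k^2 <= (k/100)*(1/100)) by (apply Rmult_le_compat; lra). replace (9*k/10000) with (9*((k/100)*(1/100))) by field. lra. }
  nra.
Qed.

Theorem theorem1p5 (r : R) (hr : 0 < r) :
  exists sigma0 : R, 0 < sigma0 /\
    forall sigma : R, 0 < sigma < sigma0 ->
    forall m n m' n' : nat, (m <= n)%nat -> (m' <= n')%nat -> (m, n) <> (m', n') ->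
    forall L M N L' M' N' : R,
      robin_sys r sigma m n L M N ->
      robin_sys r sigma m' n' L' M' N' ->
      robin_Lambda r m n L M N <> robin_Lambda r m' n' L' M' N'.
Proof.
  assert (Hpi : 3 < PI <= 4) by (split; [assert (H := PI2_3_2); lra | apply PI_4]).
  exists (PI/(300*r)). split; [apply Rdiv_lt_0_compat; lra|].
  intros sigma [Hs Hs0] m n m' n' Hmn Hmn' Hne L M N L' M' N' Hsys Hsys' HL.
  destruct (sol_facts r sigma m n L M N hr Hs Hmn Hsys)
    as [Emu [Enu [F1 [F2 [F3 [mup [munu [a0 [aN [NM MP]]]]]]]]]].
  destruct (sol_facts r sigma m' n' L' M' N' hr Hs Hmn' Hsys')
    as [Emu' [Enu' [F1' [F2' [F3' [mup' [munu' [a0' [aN' [NM' MP']]]]]]]]]].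
  set (k := 3*r*sigma/PI) in *.
  assert (Hk : 0 < k <= 1/100).
  { split; [unfold k; apply Rdiv_lt_0_compat; nra|].
    assert (rs : r*sigma < r*(PI/(300*r))) by (apply Rmult_lt_compat_l; lra).
    replace (r*(PI/(300*r))) with (PI/300) in rs by (field; lra).
    unfold k. apply Rmult_le_reg_r with PI; [lra|].
    replace (3 * r * sigma / PI * PI) with (3*(r*sigma)) by (field; lra). lra. }
  set (mu := robin_mu m L M N) in *. set (nu := robin_nu n L M N) in *.
  set (mu' := robin_mu m' L' M' N') in *. set (nu' := robin_nu n' L' M' N') in *.
  set (a := -L) in *. set (a' := -L') in *.
  assert (AM := angle_facts M ltac:(lra)). assert (AN := angle_facts N ltac:(lra)).
  assert (Aa := angle_facts a ltac:(lra)).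
  assert (AM' := angle_facts M' ltac:(lra)). assert (AN' := angle_facts N' ltac:(lra)).
  assert (Aa' := angle_facts a' ltac:(lra)).
  assert (HQ : mu^2+mu*nu+nu^2 = mu'^2+mu'*nu'+nu'^2).
  { unfold robin_Lambda in HL. cbv zeta in HL. fold mu nu mu' nu' in HL.
    apply Rmult_eq_reg_l in HL; auto.
    assert (0 < 4 * PI ^ 2 / (27 * r ^ 2)) by (apply Rdiv_lt_0_compat; nra). lra. }
  set (Q := mu^2+mu*nu+nu^2) in *.
  assert (D1 := dQ_bounds PI k mu nu M N a (INR m) (INR n) (tan M) (tan N) (tan a)
     ltac:(lra) ltac:(lra) (pos_INR m) Emu Enu F1 F2 F3 mup ltac:(lra) a0 aN NM
     ltac:(tauto) ltac:(tauto) ltac:(tauto)).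
  assert (D2 := dQ_bounds PI k mu' nu' M' N' a' (INR m') (INR n') (tan M') (tan N') (tan a')
     ltac:(lra) ltac:(lra) (pos_INR m') Emu' Enu' F1' F2' F3' mup' ltac:(lra) a0' aN' NM'
     ltac:(tauto) ltac:(tauto) ltac:(tauto)).
  fold Q in D1. rewrite <- HQ in D2.
  assert (HQ0 : (m*m+m*n+n*n = m'*m'+m'*n'+n'*n')%nat).
  { apply nat_close; rewrite !Q0_INR; lra. }
  assert (Q0e : INR m^2 + INR m*INR n + INR n^2 = INR m'^2 + INR m'*INR n' + INR n'^2)
    by (rewrite <- !Q0_INR; f_equal; exact HQ0).
  assert (HU : PI*Pq mu nu M N a - Eq M N a = PI*Pq mu' nu' M' N' a' - Eq M' N' a').
  { assert (I1 := dQ_id PI mu nu M N a (INR m) (INR n) ltac:(lra) Emu Enu).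
    assert (I2 := dQ_id PI mu' nu' M' N' a' (INR m') (INR n') ltac:(lra) Emu' Enu').
    fold Q in I1. rewrite <- HQ in I2. rewrite Q0e in I1.
    assert (3 * Pq mu nu M N a / PI - 3 * Eq M N a / PI ^ 2 =
            3 * Pq mu' nu' M' N' a' / PI - 3 * Eq M' N' a' / PI ^ 2) by lra.
    replace (PI*Pq mu nu M N a - Eq M N a) with
      ((3 * Pq mu nu M N a / PI - 3 * Eq M N a / PI ^ 2)*(PI^2/3)) by (field; lra).
    rewrite H. field. lra. }
  destruct (Nat.eq_dec m 0) as [Hm0|Hm0]; destruct (Nat.eq_dec m' 0) as [Hm0'|Hm0'].
  - subst m m'. apply Hne. f_equal. nia.
  - subst m. simpl INR in Emu.
    assert (Emu0 : PI*mu = 2*M - N + a) by lra.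
    assert (m0 := m0_bound PI k mu nu M N a (tan M) (tan N) (tan a) ltac:(lra) ltac:(lra)
       Emu0 F1 F2 F3 mup ltac:(lra) a0 aN NM ltac:(tauto) ltac:(tauto) ltac:(tauto)).
    assert (Hm1 : 1 <= INR m') by (apply (le_INR 1); lia).
    assert (Hmn1 : INR m' <= INR n') by (apply le_INR; lia).
    destruct (one_facts PI k (INR m') (INR n') mu' nu' M' N' a' (tan M') (tan N') (tan a')
      ltac:(lra) Hk ltac:(lra) Emu' Enu' F1' F2' F3' ltac:(lra) a0' aN' NM' AM' AN' Aa')
      as [mu1 [Ex [Se [Sb [QW WZ]]]]].
    rewrite HU in m0.
    apply (case01 PI k _ _ ltac:(lra) Hk m0 Ex). split; [apply sq3|exact Sb].
  - subst m'. simpl INR in Emu'.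
    assert (Emu0 : PI*mu' = 2*M' - N' + a') by lra.
    assert (m0 := m0_bound PI k mu' nu' M' N' a' (tan M') (tan N') (tan a') ltac:(lra) ltac:(lra)
       Emu0 F1' F2' F3' mup' ltac:(lra) a0' aN' NM' ltac:(tauto) ltac:(tauto) ltac:(tauto)).
    assert (Hm1 : 1 <= INR m) by (apply (le_INR 1); lia).
    assert (Hmn1 : INR m <= INR n) by (apply le_INR; lia).
    destruct (one_facts PI k (INR m) (INR n) mu nu M N a (tan M) (tan N) (tan a)
      ltac:(lra) Hk ltac:(lra) Emu Enu F1 F2 F3 ltac:(lra) a0 aN NM AM AN Aa)
      as [mu1 [Ex [Se [Sb [QW WZ]]]]].
    rewrite <- HU in m0.
    apply (case01 PI k _ _ ltac:(lra) Hk m0 Ex). split; [apply sq3|exact Sb].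
  - assert (Hm1 : 1 <= INR m) by (apply (le_INR 1); lia).
    assert (Hmn1 : INR m <= INR n) by (apply le_INR; lia).
    assert (Hm1' : 1 <= INR m') by (apply (le_INR 1); lia).
    assert (Hmn1' : INR m' <= INR n') by (apply le_INR; lia).
    destruct (one_facts PI k (INR m) (INR n) mu nu M N a (tan M) (tan N) (tan a)
      ltac:(lra) Hk ltac:(lra) Emu Enu F1 F2 F3 ltac:(lra) a0 aN NM AM AN Aa)
      as [mu1 [Ex [Se [Sb [QW WZ]]]]].
    destruct (one_facts PI k (INR m') (INR n') mu' nu' M' N' a' (tan M') (tan N') (tan a')
      ltac:(lra) Hk ltac:(lra) Emu' Enu' F1' F2' F3' ltac:(lra) a0' aN' NM' AM' AN' Aa')
      as [mu1' [Ex' [Se' [Sb' [QW' WZ']]]]].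
    rewrite HU in Ex.
    assert (cge : 1 <= 1 + PI*k/3) by (assert (0 <= PI*k) by (apply Rmult_le_pos; lra); lra).
    assert (Hd := diff_help _ _ _ _ _ _ _ cge Ex Ex').
    fold Q in Se, QW. rewrite <- HQ in Se', QW'.
    rewrite <- Q0e in WZ'.
    set (Q0 := INR m^2 + INR m*INR n + INR n^2) in *.
    assert (Q01 : 1 <= Q0) by (apply Q0_ge1; [lra| apply pos_INR]).
    assert (Qp : 0 < Q) by (apply Q_pos; lra).
    assert (Wp : 0 < mu*nu*(mu+nu)) by (apply W_pos; lra).
    assert (Wp' : 0 < mu'*nu'*(mu'+nu')) by (apply W_pos; lra).
    destruct (int_sep m n m' n' Hmn Hmn' Hne HQ0) as [Hz|Hz];
      apply le_INR in Hz; rewrite plus_INR, (mult_INR 2), !Z_INR, Q0_INR in Hz;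
      replace (INR 2) with 2 in Hz by (simpl; lra); fold Q0 in Hz.
    + eapply (final_W k Q Q0 _ _ _ _ _ _ Hk Q01 Qp ltac:(lra) Wp Wp' QW Se Se' ltac:(lra) WZ WZ' Hz).
    + eapply (final_W k Q Q0 _ _ _ _ _ _ Hk Q01 Qp ltac:(lra) Wp' Wp QW' Se' Se ltac:(rewrite Rabs_minus_sym; lra) WZ' WZ Hz).
Qed.
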